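(* Let $f\colon\mathbb{R}^n\to\mathbb{R}$ be differentiable, $L>0$, $0<t\le1$, and $\{\theta_k\}_{k=0}^\infty$ a positive sequence. Given $x_0$, define sequence (I) by $y_0=z_0=x_0$ and for $k\ge0$ \[ y_{k+1}=x_k-\tfrac1L\nabla f(x_k),\quad z_{k+1}=z_k-\tfrac{2t\theta_k}{L}\nabla f(x_k),\quad x_{k+1}=\Big(1-\tfrac1{\theta_{k+1}}\Big)y_{k+1}+\tfrac1{\theta_{k+1}}z_{k+1}, \] and sequence (II) by $y_0'=x_0'=x_0$ and for $k\ge0$ \[ y'_{k+1}=x'_k-\tfrac1L\nabla f(x'_k),\quad x'_{k+1}=y'_{k+1}+\frac{\theta_k-1}{\theta_{k+1}}(y'_{k+1}-y'_k)+(2t-1)\frac{\theta_k}{\theta_{k+1}}(y'_{k+1}-x'_k). \] Then $x_k=x'_k$ and $y_k=y'_k$ for all $k\ge0$. *)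

(* Defs.v *)
From HB Require Import structures.
From mathcomp Require Import all_boot all_order all_algebra.
From mathcomp Require Import all_classical all_reals all_analysis.
Set Implicit Arguments. Unset Strict Implicit. Unset Printing Implicit Defensive.
Import Order.TTheory GRing.Theory Num.Theory.
Import numFieldNormedType.Exports.
Local Open Scope ring_scope.

Definition basis_vec (R : realType) (n : nat) (i : 'I_n) : 'rV[R]_n :=
  delta_mx 0 i.

Definition grad (R : realType) (n : nat) (f : 'rV[R]_n -> R) (x : 'rV[R]_n)
  : 'rV[R]_n :=
  \row_(i < n) ('D_(basis_vec R i) f x).

(* Main.v *)
Require Import Defs.
From HB Require Import structures.
From mathcomp Require Import all_boot all_order all_algebra.
From mathcomp Require Import all_classical all_reals all_analysis.
From mathcomp Require Import ring lra.
Import Order.TTheory GRing.Theory Num.Theory.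
Import numFieldNormedType.Exports.
Local Open Scope ring_scope.

Theorem lemma6 (R : realType) (n : nat) (f : 'rV[R]_n -> R)
  (hf : forall x : 'rV[R]_n, differentiable f x)
  (L t : R) (hL : 0 < L) (ht0 : 0 < t) (ht1 : t <= 1)
  (theta : nat -> R) (htheta : forall k, 0 < theta k)
  (x0 : 'rV[R]_n)
  (x y z : nat -> 'rV[R]_n)
  (hx0 : x 0%N = x0) (hy0 : y 0%N = x0) (hz0 : z 0%N = x0)
  (hy : forall k, y k.+1 = x k - L^-1 *: grad f (x k))
  (hz : forall k, z k.+1 = z k - (2 * t * theta k / L) *: grad f (x k))
  (hx : forall k, x k.+1 =
          (1 - (theta k.+1)^-1) *: y k.+1 + (theta k.+1)^-1 *: z k.+1)
  (x' y' : nat -> 'rV[R]_n)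
  (hx'0 : x' 0%N = x0) (hy'0 : y' 0%N = x0)
  (hy' : forall k, y' k.+1 = x' k - L^-1 *: grad f (x' k))
  (hx' : forall k, x' k.+1 =
          y' k.+1 + ((theta k - 1) / theta k.+1) *: (y' k.+1 - y' k)
          + ((2 * t - 1) * (theta k / theta k.+1)) *: (y' k.+1 - x' k)) :
  forall k, x k = x' k /\ y k = y' k.
Proof.
have inv : forall k, [/\ x k = x' k, y k = y' k & z k = y k + theta k *: (x k - y k)].
  elim=> [|k [Ex Ey Ez]].
    by rewrite hx0 hy0 hz0 hx'0 hy'0 subrr scaler0 addr0.
  have Ey1 : y k.+1 = y' k.+1 by rewrite hy hy' Ex.
  have th1 : theta k.+1 != 0 by rewrite gt_eqF.
  have th0 : theta k != 0 by rewrite gt_eqF.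
  have L0 : L != 0 by rewrite gt_eqF.
  split.
  - rewrite hx hx' -Ey1 hz Ez hy -Ey -Ex.
    apply/rowP => i; rewrite !mxE; field; by apply/andP; split.
  - exact: Ey1.
  - rewrite hx; apply/rowP => i; rewrite !mxE; field; done.
by move=> k; case: (inv k).
Qed.
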